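(* Let $\bar{\mathcal A}\subseteq\mathcal A$ and $\bar{\mathcal T}\subseteq\mathcal T$ with $|\bar{\mathcal A}|\ge|\bar{\mathcal T}|\ge 1$. Let $\bar{\mathcal E}=\bar{\mathcal A}\times\bar{\mathcal T}$ and assume $|\bar{\mathcal E}|>1$. Suppose the robustness margin is strictly positive, $r_{\bar{\mathcal A},\bar{\mathcal T}}(\mathcal W)>0$. Then every bottleneck minimising assignment $\Pi=\{\pi_{i,j}\}\in\mathcal B_{\bar{\mathcal A},\bar{\mathcal T}}(\bar{\mathcal E},\mathcal W)$ satisfies $\pi_{i^*,j^*}=1$ for every maximum-margin bottleneck edge $(i^*,j^* )\in e_{\bar{\mathcal A},\bar{\mathcal T}}(\mathcal W)$.
   Context: Let $\mathcal A$ be a finite set of agents with $|\mathcal A|=m>1$ and $\mathcal T$ a finite set of tasks with $m\ge|\mathcal T|=n\ge 1$. Let $\mathcal W=\{w_{i,j}\ge 0:(i,j)\in\mathcal A\times\mathcal T\}$ be given assignment weights. An assignment is a family $\Pi=\{\pi_{i,j}\in\{0,1\}:(i,j)\in\mathcal A\times\mathcal T\}$ ($\pi_{i,j}=1$ means agent $i$ is assigned task $j$). For $\bar{\mathcal A}\subseteq\mathcal A$, $\bar{\mathcal T}\subseteq\mathcal T$ and an edge set $\hat{\mathcal E}\subseteq\bar{\mathcal A}\times\bar{\mathcal T}$, the set of admissible assignments $\mathcal P_{\bar{\mathcal A},\bar{\mathcal T}}(\hat{\mathcal E})$ is the set of assignments $\Pi$ with $\sum_{i:(i,j)\in\hat{\mathcal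 E}}\pi_{i,j}=1$ for every $j\in\bar{\mathcal T}$ and $\sum_{j:(i,j)\in\hat{\mathcal E}}\pi_{i,j}\le 1$ for every $i\in\bar{\mathcal A}$. Define $b(\Pi,\hat{\mathcal E},\mathcal W)=\max_{(i,j)\in\hat{\mathcal E}}\pi_{i,j}w_{i,j}$; the bottleneck weight $B_{\bar{\mathcal A},\bar{\mathcal T}}(\hat{\mathcal E},\mathcal W)=\min_{\Pi\in\mathcal P_{\bar{\mathcal A},\bar{\mathcal T}}(\hat{\mathcal E})}b(\Pi,\hat{\mathcal E},\mathcal W)$ (with $\min\emptyset=+\infty$); the set of bottleneck minimising assignments $\mathcal B_{\bar{\mathcal A},\bar{\mathcal T}}(\hat{\mathcal E},\mathcal W)=\arg\min_{\Pi\in\mathcal P_{\bar{\mathcal A},\bar{\mathcal T}}(\hat{\mathcal E})}b(\Pi,\hat{\mathcal E},\mathcal W)$; and $E_{\bar{\mathcal A},\bar{\mathcal T}}(\hat{\mathcal E},\mathcal W)=\{(i,j)\in\hat{\mathcal E}: w_{i,j}=B_{\bar{\mathcal A},\bar{\mathcal T}}(\hat{\mathcal E},\mathcal W)\}$. For the complete edge set $\bar{\mathcal E}=\bar{\mathcal A}\times\bar{\mathcal T}$ with $|\bar{\mathcal E}|>1$, the set of maximum-margin bottleneck edges is $e_{\bar{\mathcal A},\bar{\mathcal T}}(\mathcal W)=\arg\max_{(i,j)\in E_{\bar{\mathcal A},\bar{\mathcal T}}(\bar{\mathcal E},\mathcal W)}B_{\bar{\mathcal A},\bar{\mathcal T}}(\bar{\mathcal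 E}\setminus\{(i,j)\},\mathcal W)$ and the robustness margin is $r_{\bar{\mathcal A},\bar{\mathcal T}}(\mathcal W)=\max_{(i,j)\in E_{\bar{\mathcal A},\bar{\mathcal T}}(\bar{\mathcal E},\mathcal W)}\big(B_{\bar{\mathcal A},\bar{\mathcal T}}(\bar{\mathcal E}\setminus\{(i,j)\},\mathcal W)-w_{i,j}\big)$. If $|\bar{\mathcal E}|=1$, one sets $e_{\bar{\mathcal A},\bar{\mathcal T}}(\mathcal W)=\bar{\mathcal E}$ and $r_{\bar{\mathcal A},\bar{\mathcal T}}(\mathcal W)=\infty$. *)

(* Defs.v *)
From HB Require Import structures.
From mathcomp Require Import all_boot all_order all_algebra.
Set Implicit Arguments. Unset Strict Implicit. Unset Printing Implicit Defensive.
Import Order.TTheory GRing.Theory Num.Theory.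
Local Open Scope ring_scope.

(* Extended values R ∪ {+oo}: [None] stands for +oo. *)
Definition le_ext (R : realDomainType) (x y : option R) : bool :=
  match x, y with
  | _, None => true
  | None, Some _ => false
  | Some a, Some b => a <= b
  end.

Definition pos_ext (R : realDomainType) (x : option R) : bool :=
  match x with None => true | Some a => 0 < a end.

Section Bottleneck.
Variables (R : realDomainType) (A T : finType) (w : A -> T -> R).

Definition assignment := {ffun A * T -> bool}.

Definition admissible (Abar : {set A}) (Tbar : {set T}) (E : {set A * T})
    (p : assignment) : bool :=
  [forall j in Tbar, (\sum_(i | (i, j) \in E) (p (i, j) : nat))%N == 1%N] &&
  [forall i in Abar, (\sum_(j | (i, j) \in E) (p (i, j) : nat))%N <= 1]%N.

Definition bval (E : {set A * T}) (p : assignment) : R :=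
  \big[Num.max/0]_(e in E) (if p e then w e.1 e.2 else 0).

(* Bottleneck weight B_{Abar,Tbar}(E, W), with min of the empty set = +oo (None). *)
Definition Bw (Abar : {set A}) (Tbar : {set T}) (E : {set A * T}) : option R :=
  let S := [set p | admissible Abar Tbar E p] in
  if [pick p in S] is Some p0 then Some (\big[Num.min/bval E p0]_(p in S) bval E p)
  else None.

Definition Bmin (Abar : {set A}) (Tbar : {set T}) (E : {set A * T}) : {set assignment} :=
  [set p | admissible Abar Tbar E p &&
           [forall q, admissible Abar Tbar E q ==> (bval E p <= bval E q)]].

Definition Eb (Abar : {set A}) (Tbar : {set T}) (E : {set A * T}) : {set A * T} :=
  [set e in E | Some (w e.1 e.2) == Bw Abar Tbar E].

Definition Ebar (Abar : {set A}) (Tbar : {set T}) : {set A * T} := setX Abar Tbar.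

Definition margin (Abar : {set A}) (Tbar : {set T}) (e : A * T) : option R :=
  omap (fun v => v - w e.1 e.2) (Bw Abar Tbar (Ebar Abar Tbar :\ e)).

Definition emax (Abar : {set A}) (Tbar : {set T}) : {set A * T} :=
  if #|Ebar Abar Tbar| == 1%N then Ebar Abar Tbar else
  [set e in Eb Abar Tbar (Ebar Abar Tbar) |
     [forall e' in Eb Abar Tbar (Ebar Abar Tbar),
        le_ext (Bw Abar Tbar (Ebar Abar Tbar :\ e'))
               (Bw Abar Tbar (Ebar Abar Tbar :\ e))]].

Definition is_robustness_margin (Abar : {set A}) (Tbar : {set T}) (r : option R) : Prop :=
  if #|Ebar Abar Tbar| == 1%N then r = None else
  (exists2 e, e \in Eb Abar Tbar (Ebar Abar Tbar) & margin Abar Tbar e = r) /\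
  (forall e, e \in Eb Abar Tbar (Ebar Abar Tbar) -> le_ext (margin Abar Tbar e) r).

End Bottleneck.

(* Main.v *)
Require Import Defs.
From HB Require Import structures.
From mathcomp Require Import all_boot all_order all_algebra.
Import Order.TTheory GRing.Theory Num.Theory.
Local Open Scope ring_scope.

Theorem proposition1 (R : realDomainType) (A T : finType) (w : A -> T -> R)
  (hw : forall i j, 0 <= w i j)
  (hm : (1 < #|A|)%N) (hnm : (#|T| <= #|A|)%N) (hn : (1 <= #|T|)%N)
  (Abar : {set A}) (Tbar : {set T})
  (hAT : (#|Tbar| <= #|Abar|)%N) (hT : (1 <= #|Tbar|)%N)
  (hE : (1 < #|Ebar Abar Tbar|)%N)
  (r : option R) (hr : is_robustness_margin w Abar Tbar r) (hrpos : pos_ext r) :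
  forall p, p \in Bmin w Abar Tbar (Ebar Abar Tbar) ->
  forall e, e \in emax w Abar Tbar -> p e = true.
Proof.
move=> p hp e he.
have hE1 : (#|Ebar Abar Tbar| == 1%N) = false by apply/negbTE; rewrite neq_ltn hE orbT.
move: he; rewrite /emax hE1 inE => /andP [heb hmax].
move: hr; rewrite /is_robustness_margin hE1 => [[[e0 he0 hm0] _]].
apply/negPn/negP => pe; move/negbTE: pe => pe.
set E := Ebar Abar Tbar in heb hmax he0 hm0 hp.
set E' := E :\ e.
move: hp; rewrite inE => /andP [hpad /forallP hpmin].
have hpad' : admissible Abar Tbar E' p.
  move: hpad; rewrite /admissible => /andP [/forallP h1 /forallP h2].
  apply/andP; split.
    apply/forallP => j; apply/implyP => hj.
    move: (h1 j); rewrite hj /= => /eqP <-; apply/eqP.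
    rewrite big_mkcond [RHS]big_mkcond; apply: eq_bigr => i _.
    rewrite /E' in_setD1; case: eqP => [->|] //=; by rewrite pe; case: ifP.
  apply/forallP => i; apply/implyP => hi.
  move: (h2 i); rewrite hi /= => h2i; apply: leq_trans h2i.
  rewrite leq_eqVlt; apply/orP; left; apply/eqP.
  rewrite big_mkcond [RHS]big_mkcond; apply: eq_bigr => j _.
  rewrite /E' in_setD1; case: eqP => [->|] //=; by rewrite pe; case: ifP.
have [v hv hvle] : exists2 v, Bw w Abar Tbar E' = Some v & v <= bval w E' p.
  rewrite /Bw.
  case: pickP => [p0 hp0|hn0]; last by move: (hn0 p); rewrite inE hpad'.
  eexists; first reflexivity.
  rewrite (bigD1 p) /=; last by rewrite inE.
  by rewrite ge_min lexx.
have heE : e \in E by move: heb; rewrite inE => /andP [].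
have hsub : bval w E' p <= bval w E p.
  rewrite /bval [X in _ <= X](bigD1 e) //=.
  rewrite le_max; apply/orP; right.
  rewrite le_eqVlt; apply/orP; left; apply/eqP; apply: eq_bigl => x.
  by rewrite /E' in_setD1 andbC.
move: heb; rewrite inE => /andP [_ /eqP hweS].
have he0m := he0; move: he0; rewrite inE => /andP [_ /eqP hwe0S].
have he00 : w e0.1 e0.2 = w e.1 e.2 by rewrite -hweS in hwe0S; case: hwe0S.
move: hweS; rewrite /Bw; case: pickP => [p0 hp0|//] [hwe].
have hpb : bval w E p <= w e.1 e.2.
  rewrite hwe.
  apply: (big_ind (fun x => bval w E p <= x)).
  - by have := hpmin p0; move: hp0; rewrite inE => -> /=.
  - by move=> x y hx hy; rewrite le_min hx hy.
  - move=> q; rewrite inE => hq. by have := hpmin q; rewrite hq.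
move/forallP: hmax => /(_ e0); rewrite he0m /=.
rewrite -/E' hv.
case hb0: (Bw w Abar Tbar (E :\ e0)) => [u|] //= hu.
rewrite /margin hb0 /= in hm0; subst r.
move: hrpos; rewrite /= subr_gt0 he00 => hlt.
have := le_trans hu (le_trans hvle (le_trans hsub hpb)).
by rewrite leNgt hlt.
Qed.
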